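(* Let $n\ge 3$. If $\mu$ is a symmetric measure on $L_n$ such that $C_{L_n}=C_\mu$, then $C_\mu=\max\{M_1(\mu),C^0_\mu\}$.
   Context: $L_n$ is the path graph with vertices $\{1,\dots,n\}$ and edges $\{j,j+1\}$, with distance $|i-j|$. A measure on $L_n$ is a weight function $\mu:\{1,\dots,n\}\to(0,\infty)$, $\mu(A)=\sum_{v\in A}\mu(v)$; it is symmetric if $\mu(j)=\mu(n+1-j)$ for all $j$. Closed balls: $B(x,r)=\{y:|x-y|\le r\}$. $C_\mu=\sup\{\mu(B(x,2k+1))/\mu(B(x,k)):1\le x\le n,\ k\ge0\}$, $C_{L_n}=\inf_\mu C_\mu$, $C^0_\mu=\max_x\mu(B(x,1))/\mu(x)$, and $M_1(\mu)=\sup\{\mu(B(1,2k+1))/\mu(B(1,k)): k\in\mathbb Z,\ 0\le k<\lceil\frac{n-2}{3}\rceil\}$. *)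

(* Defs.v *)
From HB Require Import structures.
From mathcomp Require Import all_boot all_order all_algebra.
From mathcomp Require Import classical_sets reals.
Set Implicit Arguments. Unset Strict Implicit. Unset Printing Implicit Defensive.
Import Order.TTheory GRing.Theory Num.Theory.
Local Open Scope classical_set_scope.
Local Open Scope ring_scope.

(* The path graph L_n has vertices 1..n; distance |i - j|. *)
Definition pdist (i j : nat) : nat := ((i - j) + (j - i))%N.

(* A measure on L_n: a weight function on {1,...,n} with positive values.
   We represent it as mu : nat -> R; values outside 1..n are irrelevant. *)
Definition is_measure (R : realType) (n : nat) (mu : nat -> R) : Prop :=
  forall j, (1 <= j <= n)%N -> 0 < mu j.

Definition is_symmetric (R : realType) (n : nat) (mu : nat -> R) : Prop :=
  forall j, (1 <= j <= n)%N -> mu j = mu (n.+1 - j)%N.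

Definition ball_mass (R : realType) (n : nat) (mu : nat -> R) (x r : nat) : R :=
  \sum_(1 <= y < n.+1 | (pdist x y <= r)%N) mu y.

Definition C_mu (R : realType) (n : nat) (mu : nat -> R) : R :=
  sup [set t : R | exists x k : nat, (1 <= x <= n)%N /\
         t = ball_mass n mu x (2 * k + 1) / ball_mass n mu x k].

Definition C_L (R : realType) (n : nat) : R :=
  inf [set t : R | exists mu : nat -> R, is_measure n mu /\ t = C_mu n mu].

Definition C0_mu (R : realType) (n : nat) (mu : nat -> R) : R :=
  sup [set t : R | exists x : nat, (1 <= x <= n)%N /\
         t = ball_mass n mu x 1 / mu x].

Definition ceil_div (a b : nat) : nat := ((a + b - 1) %/ b)%N.

Definition M1 (R : realType) (n : nat) (mu : nat -> R) : R :=
  sup [set t : R | exists k : nat, (k < ceil_div (n - 2) 3)%N /\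
         t = ball_mass n mu 1 (2 * k + 1) / ball_mass n mu 1 k].

(* Main.v *)
Require Import Defs.
From HB Require Import structures.
From mathcomp Require Import all_boot all_order all_algebra.
From mathcomp Require Import classical_sets reals.
From mathcomp Require Import lra zify ring.
Set Implicit Arguments. Unset Strict Implicit. Unset Printing Implicit Defensive.
Import Order.TTheory GRing.Theory Num.Theory.
Local Open Scope ring_scope.

Definition Fz (R : realType) (n : nat) (mu : nat -> R) (y : nat) : R :=
  if (1 <= y <= n)%N then mu y else 0.

Lemma Fz_ge0 (R : realType) n (mu : nat -> R) y : is_measure n mu -> 0 <= Fz n mu y.
Proof. by move=> Hm; rewrite /Fz; case: ifP => // /Hm /ltW. Qed.

Lemma Fz0 (R : realType) n (mu : nat -> R) : Fz n mu 0 = 0.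
Proof. by []. Qed.

Lemma Fz_out (R : realType) n (mu : nat -> R) y : (n < y)%N -> Fz n mu y = 0.
Proof. by move=> H; rewrite /Fz; case: ifP => //; lia. Qed.

Lemma Fz_in (R : realType) n (mu : nat -> R) y : (1 <= y <= n)%N -> Fz n mu y = mu y.
Proof. by move=> H; rewrite /Fz H. Qed.

Lemma Fz_sym (R : realType) n (mu : nat -> R) a b : is_symmetric n mu ->
  (a + b = n.+1)%N -> Fz n mu a = Fz n mu b.
Proof.
move=> Hs Hab; rewrite /Fz.
case: ifP => Ha; case: ifP => Hb //; try lia.
have -> : b = (n.+1 - a)%N by lia.
exact: Hs.
Qed.

Lemma ball_ext (R : realType) n (mu : nat -> R) x r N : (n < N)%N ->
  ball_mass n mu x r = \sum_(0 <= y < N) (if (pdist x y <= r)%N then Fz n mu y else 0).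
Proof.
move=> HN; rewrite /ball_mass big_mkcond /=.
rewrite [RHS](big_cat_nat (n := 1)) //=; last by lia.
rewrite big_nat1 /= Fz0 if_same add0r.
rewrite [RHS](big_cat_nat (n := n.+1)) //=.

rewrite [X in _ = _ + X]big1_seq ?addr0; last first.
  move=> i; rewrite mem_index_iota => Hi; rewrite Fz_out ?if_same //; lia.
apply: eq_big_nat => i Hi; rewrite Fz_in //; lia.
Qed.

Lemma sum_pick (R : realType) (G : nat -> R) a N : (a < N)%N ->
  \sum_(0 <= y < N) (if y == a then G y else 0) = G a.
Proof.
move=> HaN; rewrite (bigD1_seq a) /=; last by rewrite iota_uniq.
  rewrite eqxx big1 ?addr0 // => i /negbTE ->; done.
by rewrite mem_index_iota.
Qed.

Lemma ball_step (R : realType) n (mu : nat -> R) x r :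
  ball_mass n mu x r.+1 = ball_mass n mu x r + Fz n mu (x + r.+1) + Fz n mu (x - r.+1).
Proof.
pose N := (n + x + r + 3)%N.
rewrite !(@ball_ext _ n mu x _ N) ?/N; try lia.
set G := Fz n mu.
have E : forall y, (if (pdist x y <= r.+1)%N then G y else 0) =
   (if (pdist x y <= r)%N then G y else 0) + (if y == (x + r.+1)%N then G y else 0)
   + (if (y + r.+1 == x)%N then G y else 0).
  move=> y; rewrite /pdist.
  have [H1|H1] := boolP ((x - y) + (y - x) <= r.+1)%N;
  have [H2|H2] := boolP ((x - y) + (y - x) <= r)%N;
  have [H3|H3] := boolP (y == (x + r.+1))%N;
  have [H4|H4] := boolP (y + r.+1 == x)%N; rewrite ?addr0 ?add0r //; lia.
rewrite (eq_bigr _ (fun y _ => E y)) !big_split /=.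
rewrite sum_pick; last by rewrite /N; lia.
have -> : \sum_(0 <= y < N) (if (y + r.+1 == x)%N then G y else 0) = G (x - r.+1)%N.
  case: (leqP r.+1 x) => Hx.
    rewrite -(@sum_pick _ G (x - r.+1)%N N); last by rewrite /N; lia.
    apply: eq_bigr => y _; congr (if _ then _ else _); apply/eqP/eqP; lia.
  have -> : (x - r.+1 = 0)%N by lia.
  rewrite /G Fz0 big1 // => y _; case: eqP => //; lia.
done.
Qed.

Definition W (R : realType) n (mu : nat -> R) x r :=
  Fz n mu x + \sum_(i < r) (Fz n mu (x + i.+1) + Fz n mu (x - i.+1)).

Lemma ball_W (R : realType) n (mu : nat -> R) x r : (1 <= x <= n)%N ->
  ball_mass n mu x r = W n mu x r.
Proof.
move=> Hx; elim: r => [|r IH].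
  rewrite /W big_ord0 addr0 (@ball_ext _ n mu x 0 (n + x + 1)); last by lia.
  rewrite -(@sum_pick _ (Fz n mu) x (n + x + 1)); last by lia.
  apply: eq_bigr => y _; rewrite /pdist.
  have [H1|H1] := boolP ((x - y) + (y - x) <= 0)%N; case: eqP => H2 //; lia.
by rewrite ball_step IH /W big_ord_recr /=; lra.
Qed.

Definition Dz (R : realType) n (mu : nat -> R) s := Fz n mu s.+1 - Fz n mu s.

Definition loc_conc (R : realType) n (mu : nat -> R) :=
  forall y, (1 <= y <= n)%N -> Fz n mu (y - 1) + Fz n mu y.+1 <= 2 * Fz n mu y.

Lemma Dz_step (R : realType) n (mu : nat -> R) s : loc_conc n mu -> (s.+1 <= n)%N ->
  Dz n mu s.+1 <= Dz n mu s.
Proof.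
move=> Hl Hs; have := Hl s.+1; rewrite subn1 /= => /(_ _).
have H : (1 <= s.+1 <= n)%N by lia.
move=> /(_ H) H'; rewrite /Dz; lra.
Qed.

Lemma Dz_mono (R : realType) n (mu : nat -> R) a b : loc_conc n mu -> (a <= b)%N -> (b <= n)%N ->
  Dz n mu b <= Dz n mu a.
Proof.
move=> Hl Hab Hb; elim: b Hab Hb => [|b IH] Hab Hb.
  by have -> : a = 0%N by lia.
case: (ltnP a b.+1) => H.
  apply: le_trans (Dz_step Hl _) (IH _ _); lia.
by have -> : a = b.+1 by lia.
Qed.

Lemma E1 (R : realType) n (mu : nat -> R) a d : loc_conc n mu -> (a + d <= n.+1)%N ->
  Fz n mu (a + d) <= Fz n mu a + d%:R * Dz n mu a.
Proof.
move=> Hl; elim: d => [|d IH] H.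
  by rewrite addn0 mul0r addr0.
have H1 := IH ltac:(lia).
have H2 : Dz n mu (a + d) <= Dz n mu a by apply: Dz_mono => //; lia.
have -> : Fz n mu (a + d.+1) = Fz n mu (a + d) + Dz n mu (a + d) by rewrite /Dz addnS; lra.
rewrite -addn1 natrD mulrDl mul1r; lra.
Qed.

Lemma E2 (R : realType) n (mu : nat -> R) a d : loc_conc n mu -> (a + d <= n)%N ->
  Fz n mu a + d%:R * Dz n mu (a + d) <= Fz n mu (a + d).
Proof.
move=> Hl; elim: d => [|d IH] H.
  by rewrite addn0 mul0r addr0.
have H1 := IH ltac:(lia).
have H2 : Dz n mu (a + d.+1) <= Dz n mu (a + d) by rewrite addnS; apply: Dz_step => //; lia.
have -> : Fz n mu (a + d.+1) = Fz n mu (a + d) + Dz n mu (a + d) by rewrite /Dz addnS; lra.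
have H3 : 0 <= (d.+1)%:R :> R by [].
have H4 : (d.+1)%:R * Dz n mu (a + d.+1) <= (d.+1)%:R * Dz n mu (a + d) by apply: ler_wpM2l.
move: H4; rewrite -addn1 natrD mulrDl mul1r; lra.
Qed.

Lemma Uni (R : realType) n (mu : nat -> R) y z : is_measure n mu -> is_symmetric n mu ->
  loc_conc n mu -> (y <= z)%N -> (y + z <= n.+1)%N -> Fz n mu y <= Fz n mu z.
Proof.
move=> Hm Hs Hl Hyz Hyzn.
case: (ltnP n z) => Hz.
  have -> : y = 0%N by lia.
  by rewrite Fz0 Fz_ge0.
have e1 := @E2 _ n mu y (z - y) Hl.
rewrite subnKC // in e1; have {}e1 := e1 Hz.
have e2 := @E1 _ n mu z (n.+1 - y - z) Hl.
have Ez : (z + (n.+1 - y - z) = n.+1 - y)%N by lia.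
rewrite Ez in e2.
have {}e2 := e2 (leq_subr _ _).
have Esym : Fz n mu (n.+1 - y) = Fz n mu y by apply: Fz_sym => //; lia.
rewrite Esym in e2.
have p1 : 0 <= (z - y)%:R :> R by [].
have p2 : 0 <= (n.+1 - y - z)%:R :> R by [].
case: (lerP 0 (Dz n mu z)) => HD.
  have : 0 <= (z - y)%:R * Dz n mu z by apply: mulr_ge0.
  lra.
have : (n.+1 - y - z)%:R * Dz n mu z <= 0 by apply: mulr_ge0_le0 => //; lra.
lra.
Qed.

Lemma LR (R : realType) n (mu : nat -> R) C t : is_measure n mu -> loc_conc n mu ->
  (t <= C)%N -> Fz n mu (C.+1 + t) <= Fz n mu C + Fz n mu C.+1.
Proof.
move=> Hm Hl HtC.
have g0 := Fz_ge0 C Hm; have g1 := Fz_ge0 C.+1 Hm.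
case: (ltnP n (C.+1 + t)) => Hn.
  rewrite Fz_out //; lra.
have e1 := @E1 _ n mu C.+1 t Hl (leqW Hn).
have e2 := @E2 _ n mu 0 C Hl; rewrite add0n Fz0 add0r in e2.
have {}e2 := e2 (leq_trans (leqnSn _) (leq_trans (leq_addr _ _) Hn)).
case: (posnP t) => Ht.
  move: e1; rewrite Ht mul0r addr0 addn0; lra.
have HD : Dz n mu C.+1 <= Dz n mu C by apply: Dz_step => //; lia.
have pt : 0 <= t%:R :> R by [].
have ptC : t%:R <= C%:R :> R by rewrite ler_nat.
have h1 : t%:R * Dz n mu C.+1 <= t%:R * Dz n mu C by apply: ler_wpM2l.
case: (lerP 0 (Dz n mu C)) => HD0.
  have : t%:R * Dz n mu C <= C%:R * Dz n mu C by apply: ler_wpM2r.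
  lra.
have : t%:R * Dz n mu C <= 0 by apply: mulr_ge0_le0 => //; lra.
lra.
Qed.

Lemma inner_bound (R : realType) n (mu : nat -> R) (B : R) x k :
  is_measure n mu -> is_symmetric n mu -> loc_conc n mu ->
  (forall y, (1 <= y <= n)%N -> Fz n mu (y - 1) + Fz n mu y.+1 <= (B - 1) * Fz n mu y) ->
  (k.+1 <= x)%N -> (x + k <= n)%N ->
  W n mu x (2 * k + 1) <= B * W n mu x k.
Proof.
move=> Hm Hs Hl Hc Hkx Hxn.
set F := Fz n mu.
pose h j := F (x + j)%N + F (x - j)%N.
pose A := \sum_(i < k) (F (x + i)%N + F (x - i)%N).
have HO : W n mu x (2 * k + 1) = F x + \sum_(i < k) h i.+1 + h k.+1
    + \sum_(i < k) h (k + i.+1).+1.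
  rewrite /W (_ : (2 * k + 1 = k + k.+1)%N); last by lia.
  rewrite big_split_ord /= big_ord_recl /= addn0.
  have -> : \sum_(i < k) (Fz n mu (x + (k + bump 0 i).+1) + Fz n mu (x - (k + bump 0 i).+1))
     = \sum_(i < k) h (k + i.+1).+1 by apply: eq_bigr => i _; rewrite /h /bump.
  rewrite /h /F /=; lra.
have T1 : \sum_(i < k) h (k + i.+1).+1 <= A + \sum_(i < k) h i.+1.
  rewrite /A -big_split; apply: ler_sum => i _ /=; rewrite /h.
  have Hi := ltn_ord i.
  have r1 : F (x + (k + i.+1).+1)%N <= F (x + i)%N + F (x + i).+1.
    have -> : (x + (k + i.+1).+1 = (x + i).+1 + k.+1)%N by lia.
    apply: LR => //; lia.
  have r2 : F (x - (k + i.+1).+1)%N <= F (x - i.+1)%N + F (x - i)%N.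
    case: (leqP x (k + i.+1).+1) => Hx.
      have -> : (x - (k + i.+1).+1 = 0)%N by lia.
      rewrite /F Fz0; have := Fz_ge0 (x - i.+1) Hm; have := Fz_ge0 (x - i) Hm; lra.
    have e1 : F (x - (k + i.+1).+1)%N = F (n.+1 - x + i + k.+2)%N by apply: Fz_sym => //; lia.
    have e2 : F (x - i.+1)%N = F (n.+1 - x + i).+1 by apply: Fz_sym => //; lia.
    have e3 : F (x - i)%N = F (n.+1 - x + i)%N by apply: Fz_sym => //; lia.
    rewrite e1 e2 e3 (_ : (n.+1 - x + i + k.+2 = (n.+1 - x + i).+1 + k.+1)%N); last by lia.
    have := @LR _ n mu (n.+1 - x + i)%N k.+1 Hm Hl ltac:(lia); rewrite /F; lra.
  have -> : (x + i.+1 = (x + i).+1)%N by lia.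
  lra.
have T2 : h 1%N + A + \sum_(i < k) h i.+2 <= (B - 1) * (F x + \sum_(i < k) h i.+1).
  have c0 := Hc x ltac:(lia).
  have cs : \sum_(i < k) (F (x + i)%N + F (x + i.+2)%N + (F (x - i.+2)%N + F (x - i)%N))
      <= \sum_(i < k) ((B - 1) * h i.+1).
    apply: ler_sum => i _; have Hi := ltn_ord i; rewrite /h mulrDr.
    have c1 := Hc (x + i.+1)%N ltac:(lia).
    have c2 := Hc (x - i.+1)%N ltac:(lia).
    rewrite (_ : (x + i.+1 - 1 = x + i)%N) in c1; last by lia.
    rewrite (_ : ((x + i.+1).+1 = x + i.+2)%N) in c1; last by lia.
    rewrite (_ : (x - i.+1 - 1 = x - i.+2)%N) in c2; last by lia.
    rewrite (_ : ((x - i.+1).+1 = x - i)%N) in c2; last by lia.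
    rewrite /F; lra.
  have e : \sum_(i < k) (F (x + i)%N + F (x + i.+2)%N + (F (x - i.+2)%N + F (x - i)%N))
      = A + \sum_(i < k) h i.+2.
    rewrite /A -big_split; apply: eq_bigr => i _; rewrite /h /=; lra.
  rewrite -mulr_sumr in cs; rewrite mulrDr; move: c0; rewrite /h subn1 /= addn1.
  rewrite /F in e cs *; lra.
have T3 : h k.+1 + \sum_(i < k) h i.+1 = h 1%N + \sum_(i < k) h i.+2.
  have E1 : \sum_(i < k.+1) h i.+1 = \sum_(i < k) h i.+1 + h k.+1 by rewrite big_ord_recr.
  have E2 : \sum_(i < k.+1) h i.+1 = h 1%N + \sum_(i < k) h i.+2 by rewrite big_ord_recl.
  lra.
rewrite HO /W -/F; lra.
Qed.

Lemma amgm (R : realType) (a c d : R) : 0 <= a -> 0 <= c -> a + c <= 2 * d -> a * c <= d * d.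
Proof.
move=> ha hc h.
have h1 : 0 <= (2 * d - (a + c)) * (2 * d + (a + c)) by apply: mulr_ge0; lra.
have h2 : 0 <= (a - c) * (a - c) by rewrite -expr2 sqr_ge0.
nra.
Qed.

Definition Sp (R : realType) n (mu : nat -> R) j := \sum_(i < j) Fz n mu i.+1.

Lemma Sp_S (R : realType) n (mu : nat -> R) j : Sp n mu j.+1 = Sp n mu j + Fz n mu j.+1.
Proof. by rewrite /Sp big_ord_recr. Qed.

Lemma Sp_ge0 (R : realType) n (mu : nat -> R) j : is_measure n mu -> 0 <= Sp n mu j.
Proof. by move=> Hm; apply: sumr_ge0 => i _; apply: Fz_ge0. Qed.

Lemma Sp_gt0 (R : realType) n (mu : nat -> R) j : is_measure n mu -> (1 <= n)%N -> (1 <= j)%N ->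
  0 < Sp n mu j.
Proof.
move=> Hm Hn Hj; case: j Hj => // j _.
rewrite /Sp big_ord_recl /=.
have : 0 < Fz n mu 1 by rewrite Fz_in ?Hm //; lia.
have : 0 <= \sum_(i < j) Fz n mu (bump 0 i).+1 by apply: sumr_ge0 => i _; apply: Fz_ge0.
lra.
Qed.

Lemma W1 (R : realType) n (mu : nat -> R) r : W n mu 1 r = Sp n mu r.+1.
Proof.
rewrite /W /Sp big_ord_recl /=; congr (_ + _); apply: eq_bigr => i _.
by rewrite /bump /= Fz0 addr0 add1n.
Qed.

Lemma chain_step (R : realType) n (mu : nat -> R) K : is_measure n mu -> is_symmetric n mu ->
  loc_conc n mu -> (1 <= K)%N -> (n <= 3 * K + 2)%N ->
  Sp n mu (2 * K + 2) * Sp n mu K <= Sp n mu (2 * K) * Sp n mu K.+1.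
Proof.
move=> Hm Hs Hl HK HnK.
set F := Fz n mu.
have -> : (2 * K + 2 = (2 * K).+1.+1)%N by lia.
rewrite !Sp_S.
have -> : Sp n mu (2 * K) = Sp n mu K + \sum_(i < K) F (K + (K - i.+1)).+1.
  rewrite /Sp (_ : (2 * K = K + K)%N); last by lia.
  rewrite big_split_ord /=; congr (_ + _).
  by rewrite [LHS](reindex_inj rev_ord_inj) /=.
set SK := Sp n mu K.
set T := \sum_(i < K) F (K + (K - i.+1)).+1.
set a := F (2 * K).+1; set b := F (2 * K).+2; set d := F K.+1.
have gSK : 0 <= SK by apply: Sp_ge0.
have gT : 0 <= T by apply: sumr_ge0 => i _; apply: Fz_ge0.
have gd : 0 <= d by apply: Fz_ge0.
have ga : 0 <= a by apply: Fz_ge0.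
have hb : b <= d.
  case: (ltnP n (2 * K).+2) => H.
    by rewrite /b /F Fz_out.
  have -> : b = F (n - (2 * K).+1)%N by rewrite /b /F; apply: Fz_sym => //; lia.
  apply: Uni => //; lia.
have ha : a * SK <= d * T.
  rewrite /SK /Sp /T !mulr_sumr; apply: ler_sum => i _.
  have Hi := ltn_ord i.
  have g1 := Fz_ge0 i.+1 Hm.
  case: (ltnP n (2 * K).+1) => H.
    rewrite /a /F Fz_out // mul0r; apply: mulr_ge0; [exact: gd | exact: Fz_ge0].
  case: (ltnP n (3 * K).+2) => H2.
    have h1 : a <= d.
      have -> : a = F (n - (2 * K))%N by rewrite /a /F; apply: Fz_sym => //; lia.
      apply: Uni => //; lia.
    have h2 : F i.+1 <= F (K + (K - i.+1)).+1 by apply: Uni => //; lia.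
    by apply: ler_pM.
  have -> : a = F K.+2 by rewrite /a /F; apply: Fz_sym => //; lia.
  have h1 : F i.+1 <= F K by apply: Uni => //; lia.
  have h2 : d <= F (K + (K - i.+1)).+1 by apply: Uni => //; lia.
  have h3 : F K + F K.+2 <= 2 * d.
    have := Hl K.+1 ltac:(lia); rewrite subn1 /=; done.
  have g2 := Fz_ge0 K Hm; have g3 := Fz_ge0 K.+2 Hm.
  have h4 : F K * F K.+2 <= d * d by apply: amgm.
  have h5 : F K.+2 * F i.+1 <= F K.+2 * F K by apply: ler_wpM2l.
  have h6 : d * d <= d * F (K + (K - i.+1)).+1 by apply: ler_wpM2l.
  apply: le_trans h5 _; apply: le_trans h6; rewrite [X in X <= _]mulrC //.
have hb' : b * SK <= d * SK by apply: ler_wpM2r.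
rewrite -/a -/b -/d.
have -> : (SK + T + a + b) * SK = SK * SK + T * SK + a * SK + b * SK by ring.
have -> : (SK + T) * (SK + d) = SK * SK + T * SK + d * T + d * SK by ring.
lra.
Qed.

Lemma div_le (R : realType) (a b c d : R) : 0 < b -> 0 < d -> a * d <= c * b -> a / b <= c / d.
Proof.
move=> hb hd h; rewrite ler_pdivrMr // mulrAC ler_pdivlMr //.
Qed.

Lemma chain (R : realType) n (mu : nat -> R) c : is_measure n mu -> is_symmetric n mu ->
  loc_conc n mu -> (3 <= n)%N -> (1 <= c)%N -> (n <= 3 * c + 2)%N -> forall d,
  Sp n mu (2 * (c.-1 + d) + 2) / Sp n mu (c.-1 + d).+1 <= Sp n mu (2 * c.-1 + 2) / Sp n mu c.
Proof.
move=> Hm Hs Hl Hn3 Hc Hn; elim => [|d IH].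
  by rewrite addn0 prednK.
apply: le_trans IH.
have Hn1 : (1 <= n)%N by lia.
apply: div_le.
- by apply: Sp_gt0 => //; lia.
- by apply: Sp_gt0 => //; lia.
have := @chain_step _ n mu (c.-1 + d).+1 Hm Hs Hl ltac:(lia) ltac:(lia).
rewrite (_ : (c.-1 + d.+1 = (c.-1 + d).+1)%N); last by lia.
rewrite (_ : (2 * (c.-1 + d).+1 = 2 * (c.-1 + d) + 2)%N); last by lia.
done.
Qed.

Lemma ball_le (R : realType) n (mu : nat -> R) x r x' r' : is_measure n mu ->
  (forall y, (1 <= y <= n)%N -> (pdist x y <= r)%N -> (pdist x' y <= r')%N) ->
  ball_mass n mu x r <= ball_mass n mu x' r'.
Proof.
move=> Hm H; rewrite /ball_mass big_mkcond [X in _ <= X]big_mkcond /=; apply: ler_sum_nat => y Hy.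
have Hy' : (1 <= y <= n)%N by lia.
case: ifP => h1; case: ifP => h2 //.
- by rewrite (H y Hy' h1) in h2.
- exact: ltW (Hm y Hy').
Qed.

Lemma ball_sym (R : realType) n (mu : nat -> R) x r : is_symmetric n mu -> (1 <= x <= n)%N ->
  ball_mass n mu x r = ball_mass n mu (n.+1 - x) r.
Proof.
move=> Hs Hx; rewrite /ball_mass [LHS]big_nat_rev [LHS]big_mkcond [RHS]big_mkcond /=; apply: eq_big_nat => y Hy.
have -> : (1 + n.+1 - y.+1 = n.+1 - y)%N by lia.
have -> : (pdist x (n.+1 - y) <= r)%N = (pdist (n.+1 - x) y <= r)%N.
  rewrite /pdist; apply/idP/idP; lia.
by rewrite -Hs //; lia.
Qed.

Lemma ball_pos (R : realType) n (mu : nat -> R) x r : is_measure n mu -> (1 <= x <= n)%N ->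
  0 < ball_mass n mu x r.
Proof.
move=> Hm Hx; rewrite ball_W // /W.
have : 0 <= \sum_(i < r) (Fz n mu (x + i.+1) + Fz n mu (x - i.+1)).
  by apply: sumr_ge0 => i _; apply: addr_ge0; apply: Fz_ge0.
have : 0 < Fz n mu x by rewrite Fz_in // Hm.
lra.
Qed.

Definition rat (R : realType) n (mu : nat -> R) x k :=
  ball_mass n mu x (2 * k + 1) / ball_mass n mu x k.

Lemma ceil_facts n : (3 <= n)%N -> (1 <= ceil_div (n - 2) 3)%N /\ (n <= 3 * ceil_div (n - 2) 3 + 2)%N.
Proof. rewrite /ceil_div => H; split; lia. Qed.

Lemma core (R : realType) n (mu : nat -> R) (B : R) : (3 <= n)%N ->
  is_measure n mu -> is_symmetric n mu -> loc_conc n mu ->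
  (forall y, (1 <= y <= n)%N -> Fz n mu (y - 1) + Fz n mu y.+1 <= (B - 1) * Fz n mu y) ->
  (forall K, (K < ceil_div (n - 2) 3)%N -> rat n mu 1 K <= B) ->
  forall x k, (1 <= x <= n)%N -> rat n mu x k <= B.
Proof.
move=> Hn Hm Hs Hl Hc HM.
have [Hc1 Hc3] := ceil_facts Hn.
set c := ceil_div (n - 2) 3 in Hc1 Hc3 HM.
have H1n : (1 <= 1 <= n)%N by lia.
have HA : forall K, rat n mu 1 K <= B.
  move=> K; case: (ltnP K c) => HK; first exact: HM.
  have := @chain _ n mu c Hm Hs Hl Hn Hc1 Hc3 (K - c.-1).
  rewrite (_ : (c.-1 + (K - c.-1) = K)%N); last by lia.
  move=> h; apply: le_trans _ (HM c.-1 ltac:(lia)).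
  rewrite /rat !ball_W // !W1 (_ : ((2 * K + 1).+1 = 2 * K + 2)%N); last by lia.
  by rewrite (_ : ((2 * c.-1 + 1).+1 = 2 * c.-1 + 2)%N) ?prednK //; lia.
have HB : forall x k, (1 <= x <= n)%N -> (x <= k)%N -> rat n mu x k <= B.
  move=> x k Hx Hxk; apply: le_trans (HA (x + k - 1)%N).
  rewrite /rat.
  have -> : ball_mass n mu x k = ball_mass n mu 1 (x + k - 1).
    apply: le_anti; apply/andP; split; apply: ball_le => // y Hy; rewrite /pdist; lia.
  apply: ler_wpM2r.
    by rewrite invr_ge0; apply: ltW; apply: ball_pos.
  apply: ball_le => // y Hy; rewrite /pdist; lia.
move=> x k Hx.
case: (leqP x k) => Hxk; first exact: HB.
case: (leqP (x + k) n) => Hxn.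
  rewrite /rat ler_pdivrMr; last exact: ball_pos.
  rewrite !ball_W //; exact: (inner_bound Hm Hs Hl Hc).
have Hx' : (1 <= n.+1 - x <= n)%N by lia.
rewrite /rat (@ball_sym _ n mu x (2 * k + 1) Hs Hx) (@ball_sym _ n mu x k Hs Hx).
apply: HB => //; lia.
Qed.

Lemma ball0 (R : realType) n (mu : nat -> R) x : (1 <= x <= n)%N -> ball_mass n mu x 0 = mu x.
Proof. by move=> Hx; rewrite ball_W // /W big_ord0 addr0 Fz_in. Qed.

Lemma ball1 (R : realType) n (mu : nat -> R) x : (1 <= x <= n)%N ->
  ball_mass n mu x 1 = mu x + (Fz n mu x.+1 + Fz n mu (x - 1)).
Proof. by move=> Hx; rewrite ball_W // /W big_ord1 Fz_in // addn1. Qed.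

Lemma rat0_loc (R : realType) n (mu : nat -> R) (b : R) y : is_measure n mu -> (1 <= y <= n)%N ->
  rat n mu y 0 <= b -> Fz n mu (y - 1) + Fz n mu y.+1 <= (b - 1) * Fz n mu y.
Proof.
move=> Hm Hy; rewrite /rat muln0 add0n ball0 // ball1 // ler_pdivrMr ?Hm // (@Fz_in _ n mu y Hy).
move=> h; rewrite mulrBl mul1r; lra.
Qed.

Lemma rat_ub (R : realType) n (mu : nat -> R) x k : is_measure n mu -> (1 <= x <= n)%N ->
  rat n mu x k <= ball_mass n mu 1 n * \sum_(0 <= y < n.+1) (Fz n mu y)^-1.
Proof.
move=> Hm Hx.
set T := ball_mass n mu 1 n; set S := \sum_(0 <= y < n.+1) (Fz n mu y)^-1.
have hpos := @ball_pos _ n mu x k Hm Hx.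
rewrite /rat ler_pdivrMr //.
have h1 : ball_mass n mu x (2 * k + 1) <= T by apply: ball_le => // y Hy; rewrite /pdist; lia.
have h2 : mu x <= ball_mass n mu x k.
  rewrite ball_W // /W Fz_in //.
  have : 0 <= \sum_(i < k) (Fz n mu (x + i.+1) + Fz n mu (x - i.+1)).
    by apply: sumr_ge0 => i _; apply: addr_ge0; apply: Fz_ge0.
  lra.
have hmx : 0 < mu x by apply: Hm.
have hS : (mu x)^-1 <= S.
  rewrite /S (bigD1_seq x) /=; [| by rewrite mem_index_iota; lia | by rewrite mem_iota iota_uniq].
  rewrite Fz_in //.
  have : 0 <= \sum_(i <- index_iota 0 n.+1 | i != x) (Fz n mu i)^-1.
    by apply: sumr_ge0 => i _; rewrite invr_ge0; apply: Fz_ge0.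
  lra.
have hT : 0 <= T by apply: ltW; apply: ball_pos => //; lia.
have hS1 : 1 <= S * mu x.
  rewrite -(mulVf (lt0r_neq0 hmx)); apply: ler_wpM2r => //; exact: ltW.
have hS0 : 0 <= S by apply: le_trans hS; rewrite invr_ge0 ltW.
have hh : S * mu x <= S * ball_mass n mu x k by apply: ler_wpM2l.
have : T * 1 <= T * (S * ball_mass n mu x k).
  apply: ler_wpM2l => //; lra.
rewrite mulr1 mulrA; lra.
Qed.

Lemma C_ub (R : realType) n (mu : nat -> R) x k : is_measure n mu -> (1 <= x <= n)%N ->
  rat n mu x k <= C_mu n mu.
Proof.
move=> Hm Hx; rewrite /C_mu.
apply: (ub_le_sup); last by exists x, k.
exists (ball_mass n mu 1 n * \sum_(0 <= y < n.+1) (Fz n mu y)^-1).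
move=> t [x' [k' [Hx' ->]]]; exact: rat_ub.
Qed.

Lemma cnt_facts (R : realType) n : (3 <= n)%N ->
  C_mu n (fun _ : nat => (1 : R)) <= 3.
Proof.
move=> Hn.
set cnt := fun _ : nat => (1 : R).
have Hm : is_measure n cnt by move=> j _; rewrite /cnt ltr01.
have Hs : is_symmetric n cnt by [].
have F01 : forall y, 0 <= Fz n cnt y <= 1.
  by move=> y; rewrite /Fz /cnt; case: ifP => _; rewrite ?lexx ?ler01.
have Fin : forall y, (1 <= y <= n)%N -> Fz n cnt y = 1 by move=> y Hy; rewrite Fz_in.
have Hc : forall y, (1 <= y <= n)%N -> Fz n cnt (y - 1) + Fz n cnt y.+1 <= (3 - 1) * Fz n cnt y.
  move=> y Hy; rewrite (Fin y Hy); have /andP[a1 a2] := F01 (y - 1)%N; have /andP[b1 b2] := F01 y.+1; lra.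
have Hl : loc_conc n cnt.
  move=> y Hy; have := Hc y Hy; rewrite (_ : (3 - 1 : R) = 2) //; lra.
have HM : forall K, (K < ceil_div (n - 2) 3)%N -> rat n cnt 1 K <= 3.
  move=> K _; rewrite /rat !ball_W //; try lia.
  rewrite !W1 ler_pdivrMr; last by apply: Sp_gt0 => //; lia.
  have -> : ((2 * K + 1).+1 = K.+1 + K.+1)%N by lia.
  rewrite /Sp big_split_ord /=.
  have h : \sum_(i < K.+1) Fz n cnt (K.+1 + i).+1 <= \sum_(i < K.+1) Fz n cnt i.+1.
    apply: ler_sum => i _; rewrite /Fz /cnt; case: ifP => h1; case: ifP => h2 //; try lia.
  have : 0 <= \sum_(i < K.+1) Fz n cnt i.+1 by apply: sumr_ge0 => i _; apply: Fz_ge0.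
  lra.
have Hall := core Hn Hm Hs Hl Hc HM.
rewrite /C_mu; apply: ge_sup.
  by exists (rat n cnt 1 0), 1%N, 0%N; split => //; lia.
by move=> t [x [k [Hx ->]]]; apply: Hall.
Qed.

Theorem proposition6p1 (R : realType) (n : nat) (mu : nat -> R) :
  (3 <= n)%N ->
  is_measure n mu -> is_symmetric n mu ->
  C_L R n = C_mu n mu ->
  C_mu n mu = Num.max (M1 n mu) (C0_mu n mu).
Proof.
move=> Hn Hm Hs HL.
have H1n : (1 <= 1 <= n)%N by lia.
have [Hc1 Hc3] := ceil_facts Hn.
set cnt := fun _ : nat => (1 : R).
have Hcntm : is_measure n cnt by move=> j _; rewrite /cnt ltr01.
have HCL : C_L R n <= C_mu n cnt.
  rewrite /C_L; apply: ge_inf; last by exists cnt.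
  exists 0 => t [nu [Hnu ->]].
  apply: le_trans (@C_ub _ n nu 1 0 Hnu H1n).
  by rewrite /rat divr_ge0 // ltW // ball_pos.
have Cm3 : C_mu n mu <= 3 by rewrite -HL; apply: le_trans HCL (cnt_facts _ Hn).
set U := ball_mass n mu 1 n * \sum_(0 <= y < n.+1) (Fz n mu y)^-1.
have HM1 : forall K, (K < ceil_div (n - 2) 3)%N -> rat n mu 1 K <= M1 n mu.
  move=> K HK; rewrite /M1; apply: ub_le_sup; last by exists K.
  by exists U => t [K' [HK' ->]]; apply: rat_ub.
have HC0 : forall y, (1 <= y <= n)%N -> rat n mu y 0 <= C0_mu n mu.
  move=> y Hy; have -> : rat n mu y 0 = ball_mass n mu y 1 / mu y.
    by rewrite /rat muln0 add0n ball0.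
  rewrite /C0_mu; apply: ub_le_sup; last by exists y.
  exists U => t [x [Hx ->]]; rewrite -(ball0 _ Hx) (_ : 1%N = (2 * 0 + 1)%N) //.
  exact: rat_ub.
have M1le : M1 n mu <= C_mu n mu.
  rewrite /M1; apply: ge_sup; first by exists (rat n mu 1 0), 0%N.
  by move=> t [K [HK ->]]; apply: C_ub.
have C0le : C0_mu n mu <= C_mu n mu.
  rewrite /C0_mu; apply: ge_sup; first by exists (ball_mass n mu 1 1 / mu 1), 1%N.
  move=> t [x [Hx ->]]; rewrite -(ball0 _ Hx) (_ : 1%N = (2 * 0 + 1)%N) //.
  exact: C_ub.
set B := Num.max (M1 n mu) (C0_mu n mu).
have HBle : B <= C_mu n mu by rewrite /B ge_max M1le C0le.
have HB3 : B <= 3 by apply: le_trans HBle Cm3.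
have Hc : forall y, (1 <= y <= n)%N -> Fz n mu (y - 1) + Fz n mu y.+1 <= (B - 1) * Fz n mu y.
  move=> y Hy; apply: rat0_loc => //; apply: le_trans (HC0 y Hy) _.
  by rewrite /B le_max lexx orbT.
have HM : forall K, (K < ceil_div (n - 2) 3)%N -> rat n mu 1 K <= B.
  move=> K HK; apply: le_trans (HM1 K HK) _.
  by rewrite /B le_max lexx.
have Hl : loc_conc n mu.
  move=> y Hy; have := Hc y Hy; have := Fz_ge0 y Hm.
  have : (B - 1) * Fz n mu y <= 2 * Fz n mu y.
    apply: ler_wpM2r; [exact: Fz_ge0 | lra].
  lra.
have Hall := core Hn Hm Hs Hl Hc HM.
apply: le_anti; rewrite HBle andbT.
rewrite /C_mu; apply: ge_sup.
  by exists (rat n mu 1 0), 1%N, 0%N.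
by move=> t [x [k [Hx ->]]]; apply: Hall.
Qed.
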